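(* Let $f_{N_2N_1}(x)=\left(\frac{\sqrt x+1}{2}\right)\sqrt{\frac{x+1}{2}}-\left(\frac{\sqrt x+1}{2}\right)^2$ for $x\in(0,\infty)$, let $f_{N_2N_1}^*(u)=u\,f_{N_2N_1}\!\left(\frac{1-u}{u}\right)$ for $u\in(0,1)$, extended by continuity to $[0,1]$ (explicitly $f_{N_2N_1}^*(u)=\frac{\sqrt2}{4}\left(\sqrt u+\sqrt{1-u}\right)-\frac14\left(1+2\sqrt{u(1-u)}\right)$), and define $\overline M_{N_2N_1}(C_1,C_2)=E_X\{f_{N_2N_1}^*(P(C_2\mid x))\}$. Then $$P_e\le \frac12\left[1-\frac{4}{2\sqrt2-1}\,\overline M_{N_2N_1}(C_1,C_2)\right].$$
   Context: Two-class decision problem: classes $C_1,C_2$, an observation $x$ in a space $\mathrm X$ with density $p(x)$, and a posteriori probabilities $P(C_1\mid x),P(C_2\mid x)\ge0$ with $P(C_1\mid x)+P(C_2\mid x)=1$. $E_X\{g(x)\}=\int_{\mathrm X} g(x)p(x)\,dx$. $P_e=E_X\{\min(P(C_1\mid x),P(C_2\mid x))\}$ is the Bayesian probability of error. *)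

(* Defs.v *)
From mathcomp Require Import all_boot all_order all_algebra.
From mathcomp Require Import all_classical all_reals all_analysis.
Set Implicit Arguments. Unset Strict Implicit. Unset Printing Implicit Defensive.
Import Order.TTheory GRing.Theory Num.Theory.
Local Open Scope ring_scope.

Definition fN2N1 {R : realType} (x : R) : R :=
  ((Num.sqrt x + 1) / 2) * Num.sqrt ((x + 1) / 2) - ((Num.sqrt x + 1) / 2) ^+ 2.

(* f*(u) = u f((1-u)/u) on (0,1); elsewhere (in particular at the endpoints
   0 and 1) the explicit formula, i.e. the extension by continuity. *)
Definition fstarN2N1 {R : realType} (u : R) : R :=
  if (0 < u) && (u < 1) then u * fN2N1 ((1 - u) / u)
  else Num.sqrt 2 / 4 * (Num.sqrt u + Num.sqrt (1 - u))
       - 1 / 4 * (1 + 2 * Num.sqrt (u * (1 - u))).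

(* Main.v *)
Require Import Defs.
From mathcomp Require Import all_boot all_order all_algebra.
From mathcomp Require Import all_classical all_reals all_analysis.
From mathcomp Require Import ring lra.
From mathcomp Require Import measurable_realfun lebesgue_integral realfun.
Import Order.TTheory GRing.Theory Num.Theory.
Local Open Scope ring_scope.

Section S.
Context {R : realType}.

Definition Ef (u : R) : R := Num.sqrt 2 / 4 * (Num.sqrt u + Num.sqrt (1 - u))
       - 1 / 4 * (1 + 2 * Num.sqrt (u * (1 - u))).

Lemma sq2 : Num.sqrt (2:R) ^+ 2 = 2.
Proof. by rewrite sqr_sqrtr. Qed.

Lemma fstarE (u : R) : 0 <= u <= 1 -> fstarN2N1 u = Ef u.
Proof.
move=> /andP[u0 u1]; rewrite /fstarN2N1 /Ef.
case: ifP => // /andP[up ul].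
set s := Num.sqrt u; set t := Num.sqrt (1 - u); set q := Num.sqrt (2:R).
have hs : s ^+ 2 = u by rewrite sqr_sqrtr.
have ht : t ^+ 2 = 1 - u by rewrite sqr_sqrtr // subr_ge0 ltW.
have hq : q ^+ 2 = 2 := sq2.
have sp : 0 < s by rewrite sqrtr_gt0.
have qp : 0 < q by rewrite sqrtr_gt0.
have -> : Num.sqrt (u * (1 - u)) = s * t by rewrite sqrtrM.
rewrite /fN2N1.
have -> : Num.sqrt ((1 - u) / u) = t / s.
  by rewrite sqrtrM ?subr_ge0 ?ltW // sqrtrV ?ltW.
have -> : Num.sqrt (((1 - u) / u + 1) / 2) = (q * s)^-1.
  have -> : ((1 - u) / u + 1) / 2 = ((q * s)^-1) ^+ 2.
    rewrite exprVn exprMn hq hs; field; lra.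
  by rewrite sqrtr_sqr ger0_norm // invr_ge0 mulr_ge0 // ltW.
have hq' : q^-1 = q / 2.
  apply: (mulfI (x:=q)); first by rewrite gt_eqF.
  by rewrite divff ?gt_eqF // mulrA -expr2 hq; field.
rewrite invfM hq' -{1}hs.
have e1 : 1 = s ^+ 2 + t ^+ 2 by rewrite hs ht; ring.
have E2 : 1 + 2 * (s * t) = (s + t) ^+ 2.
  by transitivity (s ^+ 2 + t ^+ 2 + 2 * (s * t)); [rewrite -e1 | ring].
rewrite E2.
by field; rewrite gt_eqF.
Qed.

Lemma key {s t : R} : 0 <= s -> 0 <= t -> s ^+ 2 + t ^+ 2 = 1 -> s <= t ->
  s ^+ 2 <= 1 / 2 * (1 - 4 / (2 * Num.sqrt 2 - 1) *
    (Num.sqrt 2 / 4 * (s + t) - 1 / 4 * (1 + 2 * (s * t)))).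
Proof.
move=> s0 t0 e st.
set q := Num.sqrt (2:R).
have hq : q ^+ 2 = 2 := sq2.
have q0 : 0 <= q by exact: sqrtr_ge0.
have q1 : 1 < q.
  by rewrite -(sqrtr1 R) ltr_sqrt //; lra.
have q2 : q < 2 by nra.
have s1 : s <= 1 by nra.
have t1 : t <= 1 by nra.
have G : 0 <= 2 * q * (t - s) + 2 * s - q.
  have H1 : 0 <= (t - s) * (2 + 2 * q * s - t - s) by apply: mulr_ge0; nra.
  have H2 : (2 * q * (t - s) + 2 * s - q) * (q + 2 * s) =
     2 * ((t - s) * (2 + 2 * q * s - t - s)).
    transitivity (2 * ((t - s) * (2 + 2 * q * s - t - s)) + (q ^+ 2 - 2) * (2 * (t - s) - 1) + 2 * (s ^+ 2 + t ^+ 2 - 1)); first ring.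
    by rewrite hq e !subrr mul0r mulr0 !addr0.
  have qs : 0 < q + 2 * s by lra.
  have P : 0 <= (2 * q * (t - s) + 2 * s - q) * (q + 2 * s) by rewrite H2; lra.
  nra.
have d0 : 0 < 2 * q - 1 by lra.
have w0 : 0 <= s + t by lra.
have K : (q * (s + t) - (s + t) ^+ 2) <= (2 * q - 1) * (1 - 2 * s ^+ 2).
  have -> : 1 - 2 * s ^+ 2 = (t - s) * (s + t).
    by transitivity (s ^+ 2 + t ^+ 2 - 2 * s ^+ 2); [rewrite e | ring].
  have -> : (s + t) ^+ 2 = 1 + 2 * (s * t).
    by transitivity (s ^+ 2 + t ^+ 2 + 2 * (s * t)); [ring | rewrite e].
  nra.
have -> : 1 + 2 * (s * t) = (s + t) ^+ 2.
  by transitivity (s ^+ 2 + t ^+ 2 + 2 * (s * t)); [rewrite e | ring].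
rewrite -subr_ge0.
have -> : 1 / 2 * (1 - 4 / (2 * q - 1) * (q / 4 * (s + t) - 1 / 4 * (s + t) ^+ 2)) -
   s ^+ 2 = ((2 * q - 1) * (1 - 2 * s ^+ 2) - (q * (s + t) - (s + t) ^+ 2)) / (2 * (2 * q - 1)).
  field; lra.
apply: divr_ge0; lra.
Qed.

Lemma Efb (u : R) : 0 <= u <= 1 -> `|Ef u| <= 2.
Proof.
move=> /andP[u0 u1]; rewrite /Ef.
set s := Num.sqrt u; set t := Num.sqrt (1 - u); set q := Num.sqrt (2:R).
have hs : s ^+ 2 = u by rewrite sqr_sqrtr.
have ht : t ^+ 2 = 1 - u by rewrite sqr_sqrtr // subr_ge0.
have hq : q ^+ 2 = 2 := sq2.
have -> : Num.sqrt (u * (1 - u)) = s * t by rewrite sqrtrM.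
have s0 : 0 <= s by exact: sqrtr_ge0.
have t0 : 0 <= t by exact: sqrtr_ge0.
have q0 : 0 <= q by exact: sqrtr_ge0.
have s1 : s <= 1 by nra.
have t1 : t <= 1 by nra.
have q2 : q <= 2 by nra.
have st0 : 0 <= s * t by nra.
have st1 : s * t <= 1 by nra.
have a1 : q * (s + t) <= 4 by nra.
have a0 : 0 <= q * (s + t) by nra.
rewrite ler_norml; apply/andP; split; lra.
Qed.

Lemma pointwise (u : R) : 0 <= u <= 1 ->
  Num.min (1 - u) u <= 1 / 2 * (1 - 4 / (2 * Num.sqrt 2 - 1) * fstarN2N1 u).
Proof.
move=> hu; rewrite fstarE // /Ef; case/andP: hu => u0 u1.
set s := Num.sqrt u; set t := Num.sqrt (1 - u).
have hs : s ^+ 2 = u by rewrite sqr_sqrtr.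
have ht : t ^+ 2 = 1 - u by rewrite sqr_sqrtr // subr_ge0.
have -> : Num.sqrt (u * (1 - u)) = s * t by rewrite sqrtrM.
have s0 : 0 <= s by exact: sqrtr_ge0.
have t0 : 0 <= t by exact: sqrtr_ge0.
have e : s ^+ 2 + t ^+ 2 = 1 by rewrite hs ht; ring.
have [st|ts] := leP s t.
  apply: (le_trans _ (key s0 t0 e st)); rewrite hs ge_min lexx orbT //.
have e' : t ^+ 2 + s ^+ 2 = 1 by rewrite addrC.
have K := key t0 s0 e' (ltW ts); rewrite [t + s]addrC (mulrC t s) in K.
apply: (le_trans _ K); rewrite ht ge_min lexx //.
Qed.
End S.
Local Open Scope classical_set_scope.

Theorem mainTheorem10 (d : measure_display) (X : measurableType d)
  (R : realType) (mu : {measure set X -> \bar R}) (p P1 P2 : X -> R)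
  (p_mes : measurable_fun setT p) (p_ge0 : forall x, 0 <= p x)
  (p_int : (\int[mu]_x (p x)%:E = 1)%E)
  (P1_mes : measurable_fun setT P1) (P2_mes : measurable_fun setT P2)
  (P1_ge0 : forall x, 0 <= P1 x) (P2_ge0 : forall x, 0 <= P2 x)
  (P12 : forall x, P1 x + P2 x = 1) :
  let Pe := Rintegral mu setT (fun x => Num.min (P1 x) (P2 x) * p x) in
  let Mbar := Rintegral mu setT (fun x => fstarN2N1 (P2 x) * p x) in
  Pe <= 1 / 2 * (1 - 4 / (2 * Num.sqrt 2 - 1) * Mbar).
Proof.
cbv zeta.
set Pe := Rintegral mu setT (fun x => Num.min _ _ * _).
set Mbar := Rintegral mu setT (fun x => fstarN2N1 _ * _).
have P1E x : P1 x = 1 - P2 x by rewrite -(P12 x) addrK.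
have P2b x : 0 <= P2 x <= 1.
  by rewrite P2_ge0 /= -(P12 x) lerDr.
set c := 4 / (2 * Num.sqrt 2 - 1).
have pint : mu.-integrable setT (EFin \o p).
  apply/integrableP; split; first exact/measurable_EFinP.
  under eq_integral do rewrite /= ger0_norm //.
  by rewrite p_int ltry.
have mEf : measurable_fun setT (@Ef R).
  have msq : measurable_fun setT (@Num.sqrt R).
    exact: continuous_measurable_fun (@sqrt_continuous R).
  rewrite /Ef; apply: measurable_funB.
    apply: measurable_funM => //; apply: measurable_funD => //.
    by apply: measurableT_comp => //; apply: measurable_funB.
  apply: measurable_funM => //; apply: measurable_funD => //.
  apply: measurable_funM => //; apply: measurableT_comp => //.
  by apply: measurable_funM => //; apply: measurable_funB.
have mh : measurable_fun setT (fun x => Ef (P2 x)).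
  exact: measurableT_comp.
have bh : [bounded Ef (P2 x) | x in setT].
  rewrite /bounded_near; near=> M => x _ /=.
  have := @Efb _ (P2 x) (P2b x); move/le_trans; apply; near: M; exact: nbhs_pinfty_ge.
have gint : mu.-integrable setT (EFin \o (fun x => Ef (P2 x) * p x)).
  have H := integrableMr measurableT mh bh pint.
  by apply: (eq_integrable measurableT _ _ _ H) => x _ /=; rewrite EFinM.
have mmin : measurable_fun setT (fun x => Num.min (P1 x) (P2 x)).
  exact: measurable_minr.
have bmin : [bounded Num.min (P1 x) (P2 x) | x in setT].
  rewrite /bounded_near; near=> M => x _ /=.
  have : `|Num.min (P1 x) (P2 x)| <= 1.
    rewrite ger0_norm; last by rewrite le_min P1_ge0 P2_ge0.
    by rewrite ge_min; case/andP: (P2b x) => _ ->; rewrite orbT.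
  move/le_trans; apply; near: M; exact: nbhs_pinfty_ge.
have mint : mu.-integrable setT (EFin \o (fun x => Num.min (P1 x) (P2 x) * p x)).
  have H := integrableMr measurableT mmin bmin pint.
  by apply: (eq_integrable measurableT _ _ _ H) => x _ /=; rewrite EFinM.
have Mb : Mbar = Rintegral mu setT (fun x => Ef (P2 x) * p x).
  by apply: eq_Rintegral => x _; rewrite fstarE.
have p1 : Rintegral mu setT p = 1 by rewrite /Rintegral p_int.
have i1 : mu.-integrable setT (EFin \o (fun x => 1 / 2 * p x)).
  have H := integrableZl measurableT (1/2) pint.
  by apply: (eq_integrable measurableT _ _ _ H) => x _ /=.
have i2 : mu.-integrable setT (EFin \o (fun x => (1 / 2 * c) * (Ef (P2 x) * p x))).
  have H := integrableZl measurableT (1/2 * c) gint.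
  by apply: (eq_integrable measurableT _ _ _ H) => x _ /=.
have hint : mu.-integrable setT
   (EFin \o (fun x => 1 / 2 * p x - (1 / 2 * c) * (Ef (P2 x) * p x))).
  have H := integrableB measurableT i1 i2.
  by apply: (eq_integrable measurableT _ _ _ H) => x _ /=.
apply: (le_trans (y := Rintegral mu setT
   (fun x => 1 / 2 * p x - (1 / 2 * c) * (Ef (P2 x) * p x)))).
  apply: le_Rintegral => // x _.
  have H := @pointwise _ (P2 x) (P2b x).
  rewrite fstarE // -/c -P1E in H.
  have := ler_wpM2r (p_ge0 x) H.
  by move/le_trans; apply; rewrite le_eqVlt; apply/orP; left; apply/eqP; ring.
rewrite RintegralB //.
rewrite RintegralZl // RintegralZl // p1 Mb; rewrite le_eqVlt; apply/orP; left; apply/eqP; ring.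
Unshelve. all: end_near.
Qed.
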